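(* Let $0<R\le\infty$ and let $\varphi$ be a quasiconcave function on $[0,R)$. Then: (i) there is $C>0$ such that $(S_\varphi f)^{**}(t)\le C\,S_\varphi(f^{**})(t)$ for all measurable $f$ on $(0,R)$ and all $t\in(0,R)$ if and only if $\varphi$ satisfies the $B$-condition; (ii) there is $C>0$ such that $S_\varphi(f^{**})(t)\le C\,S_\varphi f(t)$ for all measurable $f$ on $(0,R)$ and all $t\in(0,R)$ if and only if $\varphi$ satisfies the $B$-condition.
   Context: For a measurable a.e. finite function $f$ on $(0,R)$, $f^*$ is its non-increasing rearrangement, $f^*(t)=\inf\{\lambda>0: |\{x:|f(x)|>\lambda\}|\le t\}$, and $f^{**}(t)=\frac1t\int_0^t f^*(s)\,ds$. A function $\varphi\colon[0,R)\to[0,\infty)$ is quasiconcave if $\varphi(t)=0$ iff $t=0$, $\varphi$ is non-decreasing, and $\varphi(t)/t$ is non-increasing on $(0,R)$. It satisfies the $B$-condition if there is $C>0$ with $\frac1t\int_0^t \frac{ds}{\varphi(s)}\le \frac{C}{\varphi(t)}$ for all $t\in(0,R)$. $S_\varphi f(t)=\frac{1}{\varphi(t)}\sup_{0<s<t}\varphi(s)f^*(s)$, $t\in(0,R)$; $S_\varphi(f^{**})$ is $S_\varphi$ applied to the function $f^{**}$. *)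

(* Defs.v *)
From mathcomp Require Import all_boot all_order all_algebra.
From mathcomp Require Import all_classical all_reals all_analysis measurable_realfun.
Import Order.TTheory GRing.Theory Num.Theory.

Set Implicit Arguments.
Unset Strict Implicit.
Unset Printing Implicit Defensive.

Local Open Scope classical_set_scope.
Local Open Scope ring_scope.
Local Open Scope ereal_scope.

Section Defs.
Variable R : realType.

Definition dom (Rb : \bar R) : set R := [set x : R | (0 < x)%R /\ x%:E < Rb].

Definition distrib (Rb : \bar R) (g : R -> \bar R) (lam : R) : \bar R :=
  (@lebesgue_measure R) (dom Rb `&` [set x | lam%:E < `|g x|]).

Definition rearr (Rb : \bar R) (g : R -> \bar R) (t : R) : \bar R :=
  ereal_inf [set lam%:E | lam in [set lam : R | (0 < lam)%R /\ distrib Rb g lam <= t%:E]].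

Definition dstar (Rb : \bar R) (g : R -> \bar R) (t : R) : \bar R :=
  (t^-1)%:E * \int[@lebesgue_measure R]_(s in `]0%R, t[) rearr Rb g s.

Definition Sphi (Rb : \bar R) (phi : R -> R) (g : R -> \bar R) (t : R) : \bar R :=
  ((phi t)^-1)%:E * ereal_sup [set (phi s)%:E * rearr Rb g s | s in `]0%R, t[].

Definition quasiconcave (Rb : \bar R) (phi : R -> R) : Prop :=
  [/\ (forall t : R, (0 <= t)%R -> t%:E < Rb -> (phi t = 0%R <-> t = 0%R)),
      (forall t : R, (0 <= t)%R -> t%:E < Rb -> (0 <= phi t)%R),
      (forall s t : R, (0 <= s)%R -> (s <= t)%R -> t%:E < Rb -> (phi s <= phi t)%R) &
      (forall s t : R, (0 < s)%R -> (s <= t)%R -> t%:E < Rb -> (phi t / t <= phi s / s)%R)].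

Definition Bcond (Rb : \bar R) (phi : R -> R) : Prop :=
  exists C : R, (0 < C)%R /\ forall t : R, dom Rb t ->
    (t^-1)%:E * \int[@lebesgue_measure R]_(s in `]0%R, t[) ((phi s)^-1)%:E
      <= (C / phi t)%:E.

Definition admissible (Rb : \bar R) (f : R -> \bar R) : Prop :=
  measurable_fun (dom Rb) f /\
  {ae @lebesgue_measure R, forall x, dom Rb x -> f x \is a fin_num}.

End Defs.

(* Main.v *)
Require Import Defs.
From mathcomp Require Import all_boot all_order all_algebra.
From mathcomp Require Import all_classical all_reals all_analysis measurable_realfun.
From mathcomp Require Import ring lra.
Import Order.TTheory GRing.Theory Num.Theory.
Local Open Scope classical_set_scope.
Local Open Scope ring_scope.
Local Open Scope ereal_scope.

Section S.
Variable R : realType.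
Notation mu := (@lebesgue_measure R).

Lemma lebmono (A B : set R) : A `<=` B -> mu A <= mu B.
Proof.
move=> AB. rewrite /lebesgue_measure /lebesgue_stieltjes_measure /measure_extension.
exact: le_outer_measure.
Qed.

Lemma emono_meas (D : set R) (f : R -> \bar R) : is_interval D ->
  (forall x y, D x -> D y -> (x <= y)%R -> f y <= f x) -> measurable_fun D f.
Proof.
move=> iD fni mD.
apply: (measurability _ (ErealGenOInfty.measurableE R)) => //.
move=> /= _ [_ [r ->]] <-.
apply: is_interval_measurable.
rewrite /is_interval. move=> x y [Dx fx] [Dy fy] z /andP[xz zy].
have Dz : D z by apply: (iD x y) => //; rewrite xz zy.
split => //=; rewrite /= in_itv /= andbT in fy *.
by rewrite in_itv /= andbT; apply: (lt_le_trans fy); apply: fni.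
Qed.

Lemma meas_itv_oo (a b : R) : measurable (`]a, b[ : set R).
Proof. exact: measurable_itv. Qed.

Lemma leb_itv_oo {a b : R} : (a <= b)%R -> mu `]a, b[ = (b - a)%:E.
Proof.
move=> ab; rewrite lebesgue_measure_itv /= lte_fin.
case: ltP => [_|ba]; first by rewrite -EFinD.
have -> : b = a by apply/eqP; rewrite eq_le ab ba.
by rewrite subrr.
Qed.


Lemma leb_itv_co {a b : R} : (a <= b)%R -> mu `[a, b[ = (b - a)%:E.
Proof.
move=> ab; rewrite lebesgue_measure_itv /= lte_fin.
case: ltP => [_|ba]; first by rewrite -EFinD.
have -> : b = a by apply/eqP; rewrite eq_le ab ba.
by rewrite subrr.
Qed.

Section Rearr.
Variable Rb : \bar R.

Lemma rearr_ge0 g t : 0 <= rearr Rb g t.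
Proof.
apply: le_ereal_inf_tmp => _ [lam [lam0 _] <-].
by rewrite lee_fin ltW.
Qed.

Lemma rearr_ni g s t : (s <= t)%R -> rearr Rb g t <= rearr Rb g s.
Proof.
move=> st; apply: ereal_inf_le_tmp => _ [lam [lam0 hl] <-].
exists lam => //; split => //; apply: (le_trans hl); by rewrite lee_fin.
Qed.

Lemma rearr_le g s c : (0 < s)%R -> 0 <= c ->
  (forall x, dom Rb x -> (s <= x)%R -> `|g x| <= c) -> rearr Rb g s <= c.
Proof.
move=> s0 c0 H; move: c c0 H => [r| |] //; last by move=> *; exact: leey.
rewrite lee_fin => r0 H; apply/lee_addgt0Pr => e e0.
apply: ge_ereal_inf; exists (r + e)%R%:E; last by rewrite EFinD.
exists (r + e)%R => //; split; first by rewrite ltr_wpDl.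
rewrite /distrib; apply: (le_trans (@lebmono _ `]0%R, s[ _)).
  move=> x [[x0 xR] /= lx]; rewrite /= in_itv /= x0 /=.
  rewrite ltNge; apply/negP => sx.
  have := H x (conj x0 xR) sx; move=> /(lt_le_trans lx).
  by rewrite lte_fin ltNge lerDl ltW.
by rewrite leb_itv_oo ?subr0 //; exact: ltW.
Qed.

Lemma rearr_ge g s s' c : (0 <= s)%R -> (s < s')%R -> s'%:E <= Rb ->
  (forall x, (0 < x)%R -> (x < s')%R -> c <= `|g x|) -> c <= rearr Rb g s.
Proof.
move=> s0 ss' s'R H; apply: le_ereal_inf_tmp => _ [lam [lam0 hl] <-].
rewrite leNgt; apply/negP => lc.
have : mu `]0%R, s'[ <= distrib Rb g lam.
  apply: lebmono => x /=; rewrite in_itv /= => /andP[x0 xs]; split.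
    by split => //; apply: (lt_le_trans _ s'R); rewrite lte_fin.
  by apply: (lt_le_trans lc); apply: H.
rewrite leb_itv_oo ?subr0; last by rewrite ltW // (le_lt_trans s0).
move=> /le_trans /(_ hl); by rewrite lee_fin leNgt ss'.
Qed.

End Rearr.

Lemma lim_le (c x : \bar R) (k0 : R) : (k0 < 1)%R -> 0 <= c ->
  (forall k, (k0 < k < 1)%R -> k%:E * c <= x) -> c <= x.
Proof.
move=> k01 c0 H.
pose k1 := ((Num.max k0 0 + 1) / 2)%R.
have k1a : (k0 < k1 < 1)%R.
  have := midf_lt (x := Num.max k0 0%R) (y := 1%R).
  rewrite gt_max k01 ltr01 => /(_ isT) [h1 h2].
  by rewrite /k1 h2 (le_lt_trans _ h1) // le_max lexx.
have k1p : (0 < k1)%R.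
  by rewrite /k1 divr_gt0 // ltr_pwDr // le_max lexx orbT.
move: c c0 H => [r| |] //; last first.
  by move=> _ /(_ k1 k1a); rewrite gt0_muley ?lte_fin // leye_eq => /eqP ->.
rewrite lee_fin => r0 H; move: x H => [y| |] H; last 2 first.
- exact: leey.
- by have := H k1 k1a; rewrite -EFinM leeNy_eq.
rewrite lee_fin leNgt; apply/negP => yr.
have rp : (0 < r)%R by apply: le_lt_trans yr; move: (H k1 k1a); rewrite lee_fin => h; 
  apply: le_trans h; exact: mulr_ge0 (ltW k1p) r0.
pose k := ((Num.max (Num.max k0 0) (y / r) + 1) / 2)%R.
have yr1 : (y / r < 1)%R by rewrite ltr_pdivrMr // mul1r.
have := midf_lt (x := Num.max (Num.max k0 0%R) (y / r)%R) (y := 1%R).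
rewrite !gt_max k01 ltr01 yr1 => /(_ isT) [/andP[/andP[hk0 _] hyr] h2].
have ka : (k0 < k < 1)%R by rewrite /k h2 hk0.
have := H k ka; rewrite -EFinM lee_fin; apply/negP; rewrite -ltNge.
by move: hyr; rewrite -/k ltr_pdivrMr.
Qed.


Section Dstar.
Variable Rb : \bar R.
Variable g : R -> \bar R.
Let r := rearr Rb g.
Let I t := \int[mu]_(s in `]0%R, t[) r s.

Lemma rearr_measT : measurable_fun setT r.
Proof. by apply: emono_meas => // x y _ _; exact: rearr_ni. Qed.

Lemma rearr_meas (D : set R) : measurable D -> measurable_fun D r.
Proof. move=> mD; exact: measurable_funS rearr_measT. Qed.

Lemma I_ge0 t : 0 <= I t.
Proof. by apply: integral_ge0 => x _; exact: rearr_ge0. Qed.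

Lemma dstarE t : dstar Rb g t = (t^-1)%:E * I t.
Proof. by []. Qed.

Lemma dstar_ge0 t : (0 < t)%R -> 0 <= dstar Rb g t.
Proof. by move=> t0; rewrite dstarE mule_ge0 ?I_ge0 // lee_fin invr_ge0 ltW. Qed.

Lemma I_ge t : (0 < t)%R -> r t * t%:E <= I t.
Proof.
move=> t0; have -> : t%:E = mu `]0%R, t[ by rewrite leb_itv_oo ?subr0 // ltW.
rewrite -integral_cst //.
apply: ge0_le_integral => //.
- by move=> x _; exact: rearr_ge0.
- exact: rearr_meas.
- move=> x; rewrite /= in_itv /= => /andP[_ xt]; apply: rearr_ni; exact: ltW.
Qed.

Lemma dstar_ge t : (0 < t)%R -> r t <= dstar Rb g t.
Proof.
move=> t0; rewrite dstarE.
apply: (@le_trans _ _ ((t^-1)%:E * (r t * t%:E))).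
  by rewrite muleCA -EFinM mulVf ?mule1 // gt_eqF.
by apply: lee_wpmul2l; [rewrite lee_fin invr_ge0 ltW | exact: I_ge].
Qed.

Lemma I_mono s t : (s <= t)%R -> I s <= I t.
Proof.
move=> st; apply: ge0_subset_integral => //.
- exact: rearr_meas.
- by move=> x _; exact: rearr_ge0.
- by apply: subset_itvl; rewrite bnd_simp.
Qed.

Lemma dstar_qc s t : (0 < s)%R -> (s <= t)%R -> (s / t)%:E * dstar Rb g s <= dstar Rb g t.
Proof.
move=> s0 st; have t0 : (0 < t)%R by apply: lt_le_trans st.
rewrite !dstarE muleA -EFinM mulrAC divff ?gt_eqF // mul1r.
by apply: lee_wpmul2l; [rewrite lee_fin invr_ge0 ltW | exact: I_mono].
Qed.

Lemma I_split s t : (0 < s)%R -> (s <= t)%R -> I t <= I s + r s * (t - s)%:E.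
Proof.
move=> s0 st; rewrite /I.
have -> : `]0%R, t[%classic = `]0%R, s[%classic `|` `[s, t[%classic :> set R.
  apply/seteqP; split => x /=; rewrite !in_itv /=.
    move=> /andP[x0 xt]; have [xs|sx] := ltP x s; first by left; rewrite x0.
    by right; rewrite xt.
  case=> /andP[x0 xs]; first by rewrite x0 (lt_le_trans xs).
  by rewrite (lt_le_trans s0 x0).
rewrite ge0_integral_setU //.
- apply: leeD2l; rewrite -(leb_itv_co st) -integral_cst //=.
  apply: ge0_le_integral => //.
  + by move=> x _; exact: rearr_ge0.
  + exact: rearr_meas.
  + move=> x; rewrite /= in_itv /= => /andP[sx _]; exact: rearr_ni.
- by apply: rearr_meas; exact: measurableU.
- by move=> x _; exact: rearr_ge0.
- apply/disj_setPS => x [] /=; rewrite !in_itv /= => /andP[_ xs] /andP[sx _].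
  by move: (lt_le_trans xs sx); rewrite ltxx.
Qed.

Lemma dstar_ni s t : (0 < s)%R -> (s <= t)%R -> dstar Rb g t <= dstar Rb g s.
Proof.
move=> s0 st; have t0 : (0 < t)%R by apply: lt_le_trans st.
have := I_ge0 s; have := dstar_ge _ s0; rewrite !dstarE.
case Is : (I s) => [v| |] //; last first.
  by move=> _ _; rewrite gt0_muley ?leey // lte_fin invr_gt0.
rewrite -EFinM lee_fin => rs v0.
have H : I t <= (v + s^-1 * v * (t - s))%:E.
  apply: (le_trans (I_split _ _ s0 st)); rewrite Is (EFinD v).
  by apply: leeD2l; rewrite EFinM; apply: lee_wpmul2r => //; rewrite lee_fin subr_ge0.
apply: (le_trans (lee_wpmul2l _ H)); first by rewrite lee_fin invr_ge0 ltW.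
rewrite -EFinM lee_fin le_eqVlt; apply/orP; left; apply/eqP.
by field; apply/andP; split; rewrite gt_eqF.
Qed.

End Dstar.


Lemma dom_ext (Rb : \bar R) (s : R) : dom Rb s -> exists t0, (s < t0)%R /\ t0%:E <= Rb.
Proof.
case=> s0; case: Rb => [r| |] //= sr.
- by exists r; split => //; rewrite -lte_fin.
- by exists (s + 1)%R; split; [rewrite ltrDl ltr01 | exact: leey].
Qed.

Lemma rearr_dstar_le (Rb : \bar R) (g : R -> \bar R) (s : R) : (0 < s)%R -> rearr Rb (dstar Rb g) s <= dstar Rb g s.
Proof.
move=> s0; apply: rearr_le => //; first exact: dstar_ge0.
move=> x [x0 _] sx; rewrite gee0_abs; first exact: dstar_ni.
exact: dstar_ge0.
Qed.

Lemma rearr_dstar_ge (Rb : \bar R) (g : R -> \bar R) (s : R) : dom Rb s -> dstar Rb g s <= rearr Rb (dstar Rb g) s.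
Proof.
move=> ds; have [s0 _] := ds; have [t0 [st0 t0R]] := dom_ext _ _ ds.
have t00 : (0 < t0)%R by apply: lt_trans st0.
apply: (@lim_le _ _ (s / t0)); first by rewrite ltr_pdivrMr // mul1r.
  exact: dstar_ge0.
move=> k /andP[k0 k1].
have kp : (0 < k)%R by apply: lt_trans k0; rewrite divr_gt0.
have ss' : (s < s / k)%R by rewrite ltr_pdivlMr // gtr_pMr.
have s't0 : (s / k < t0)%R by rewrite ltr_pdivrMr // mulrC -ltr_pdivrMr.
apply: (@rearr_ge Rb _ s (s / k)%R) => //; first exact: ltW.
  by apply: le_trans t0R; rewrite lee_fin ltW.
move=> x x0 xs'; rewrite gee0_abs; last exact: dstar_ge0.
apply: (le_trans _ (@dstar_ni Rb g x (s / k)%R x0 (ltW xs'))).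
have -> : k%:E = (s / (s / k))%:E by congr EFin; rewrite invf_div mulrA mulrAC divff ?gt_eqF // mul1r.
apply: dstar_qc => //; exact: ltW.
Qed.


Section Phi.
Variable Rb : \bar R.
Variable phi : R -> R.
Hypothesis qc : quasiconcave Rb phi.

Lemma dom_down {s t : R} : dom Rb t -> (0 < s)%R -> (s <= t)%R -> dom Rb s.
Proof. by move=> [t0 tR] s0 st; split => //; apply: le_lt_trans tR; rewrite lee_fin. Qed.

Lemma phi_pos {t : R} : dom Rb t -> (0 < phi t)%R.
Proof.
case: qc => h0 hge _ _ [t0 tR]; rewrite lt_def hge ?ltW // andbT.
by apply/eqP => /(h0 t (ltW t0) tR) te; move: t0; rewrite te ltxx.
Qed.

Lemma phi_mono {s t : R} : dom Rb t -> (0 < s)%R -> (s <= t)%R -> (phi s <= phi t)%R.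
Proof. case: qc => _ _ h _ [t0 tR] s0 st; exact: h (ltW s0) st tR. Qed.

Lemma phi_qc {s t : R} : dom Rb t -> (0 < s)%R -> (s <= t)%R -> (phi t * s <= phi s * t)%R.
Proof.
case: qc => _ _ _ h [t0 tR] s0 st; have := h s t s0 st tR.
by rewrite ler_pdivrMr // mulrAC ler_pdivlMr.
Qed.

Definition M g t := ereal_sup [set (phi s)%:E * rearr Rb g s | s in `]0%R, t[].

Lemma SphiE g t : Sphi Rb phi g t = ((phi t)^-1)%:E * M g t.
Proof. by []. Qed.

Lemma M_ub g t B : (forall s, (0 < s)%R -> (s < t)%R -> (phi s)%:E * rearr Rb g s <= B) ->
  M g t <= B.
Proof.
move=> H; apply: ge_ereal_sup => _ [s /= hs <-].
by move: hs; rewrite in_itv /= => /andP[s0 st]; exact: H.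
Qed.

Lemma M_lb g t s : (0 < s)%R -> (s < t)%R -> (phi s)%:E * rearr Rb g s <= M g t.
Proof.
move=> s0 st; apply: ereal_sup_ubound; exists s => //=.
by rewrite in_itv /= s0 st.
Qed.

Lemma M_ge0 g t : dom Rb t -> 0 <= M g t.
Proof.
move=> dt; have [t0 _] := dt.
have h2 : (0 < t / 2)%R by rewrite divr_gt0.
have h2t : (t / 2 < t)%R by rewrite ltr_pdivrMr // ltr_pMr // ltr1n.
apply: le_trans (M_lb g _ _ h2 h2t).
apply: mule_ge0; last exact: rearr_ge0.
by rewrite lee_fin ltW // (phi_pos (dom_down dt h2 (ltW h2t))).
Qed.

Lemma Sphi_ge0 g t : dom Rb t -> 0 <= Sphi Rb phi g t.
Proof.
move=> dt; rewrite SphiE mule_ge0 ?M_ge0 //.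
by rewrite lee_fin invr_ge0 ltW // phi_pos.
Qed.

Lemma M_ge_rearr g t : dom Rb t -> (phi t)%:E * rearr Rb g t <= M g t.
Proof.
move=> dt; have [t0 _] := dt.
apply: (@lim_le _ _ 0%R) => //.
  by apply: mule_ge0; [rewrite lee_fin ltW // phi_pos | exact: rearr_ge0].
move=> k /andP[k0 k1].
have kt0 : (0 < k * t)%R by rewrite mulr_gt0.
have ktt : (k * t < t)%R by rewrite gtr_pMl.
apply: le_trans (M_lb g _ _ kt0 ktt).
rewrite muleA -EFinM; apply: lee_pmul.
- by rewrite lee_fin mulr_ge0 // ltW // phi_pos.
- exact: rearr_ge0.
- rewrite lee_fin; have := phi_qc dt kt0 (ltW ktt).
  by rewrite mulrA [(phi t * k)%R]mulrC ler_pM2r.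
- by apply: rearr_ni; exact: ltW.
Qed.

Lemma Sphi_ge_rearr g t : dom Rb t -> rearr Rb g t <= Sphi Rb phi g t.
Proof.
move=> dt; rewrite SphiE.
apply: le_trans (lee_wpmul2l _ (M_ge_rearr g _ dt)).
  by rewrite muleA -EFinM mulVf ?mul1e // gt_eqF // phi_pos.
by rewrite lee_fin invr_ge0 ltW // phi_pos.
Qed.


Lemma lemul {x y z : \bar R} : 0 <= x -> y <= z -> x * y <= x * z.
Proof. by move=> x0 yz; apply: lee_wpmul2l. Qed.

Lemma div_bound (p : R) (x y : \bar R) : (0 < p)%R -> (p%:E * x <= y) -> x <= (p^-1)%:E * y.
Proof.
move=> p0 h; apply: le_trans (lee_wpmul2l _ h); last by rewrite lee_fin invr_ge0 ltW.
by rewrite muleA -EFinM mulVf ?mul1e // gt_eqF.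
Qed.

Lemma meas_cphi (c s : R) : (0 <= c)%R -> dom Rb s ->
  measurable_fun `]0%R, s[ (fun u => (c * (phi u)^-1)%:E).
Proof.
move=> c0 ds; apply: emono_meas; first exact: interval_is_interval.
move=> x y; rewrite /= !in_itv /= => /andP[x0 xs] /andP[y0 ys] xy.
have dy : dom Rb y by apply: (dom_down ds y0 (ltW ys)).
rewrite lee_fin ler_wpM2l // lef_pV2 ?posrE ?phi_pos //; last exact: dom_down dy x0 xy.
exact: phi_mono dy x0 xy.
Qed.

Definition J s := \int[mu]_(u in `]0%R, s[) ((phi u)^-1)%:E.

Lemma int_cphi (c s : R) : (0 <= c)%R -> dom Rb s ->
  \int[mu]_(u in `]0%R, s[) ((c * (phi u)^-1)%:E) = c%:E * J s.
Proof.
move=> c0 ds; rewrite /J -ge0_integralZl_EFin //.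
- move=> u; rewrite /= in_itv /= => /andP[u0 us].
  by rewrite lee_fin invr_ge0 ltW // (phi_pos (dom_down ds u0 (ltW us))).
- by have := meas_cphi _ _ ler01 ds; apply: eq_measurable_fun => u _; rewrite mul1r.
Qed.

Lemma ii_suff (C : R) : (0 < C)%R ->
  (forall t, dom Rb t -> (t^-1)%:E * J t <= (C / phi t)%:E) ->
  forall f t, dom Rb t -> Sphi Rb phi (dstar Rb f) t <= C%:E * Sphi Rb phi f t.
Proof.
move=> C0 HB f t dt; rewrite !SphiE muleCA.
apply: lee_wpmul2l; first by rewrite lee_fin invr_ge0 ltW // phi_pos.
have := M_ge0 f _ dt; case Mf : (M f t) => [v| |] // v0; last first.
  by rewrite gt0_muley ?leey // lte_fin.
rewrite lee_fin in v0.
apply: M_ub => s s0 st.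
have ds : dom Rb s := dom_down dt s0 (ltW st).
have ps := phi_pos ds.
apply: (le_trans (lemul _ (rearr_dstar_le Rb f s s0))); first by rewrite lee_fin ltW.
have H1 : \int[mu]_(u in `]0%R, s[) rearr Rb f u <= v%:E * J s.
  rewrite -int_cphi //; apply: ge0_le_integral => //.
  - by move=> u _; exact: rearr_ge0.
  - exact: rearr_meas.
  - exact: meas_cphi.
  - move=> u; rewrite /= in_itv /= => /andP[u0 us].
    have du : dom Rb u := dom_down ds u0 (ltW us).
    rewrite mulrC EFinM; apply: div_bound; first exact: phi_pos.
    by rewrite -Mf; apply: M_lb => //; apply: lt_trans st.
rewrite dstarE.
apply: (le_trans (lemul _ (lemul _ H1))).
- by rewrite lee_fin ltW.
- by rewrite lee_fin invr_ge0 ltW.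
rewrite (muleCA (s^-1)%:E v%:E) (muleCA (phi s)%:E v%:E) [C%:E * _]muleC.
apply: lemul; first by rewrite lee_fin.
apply: (le_trans (lemul _ (HB s ds))); first by rewrite lee_fin ltW.
by rewrite -EFinM mulrCA divff ?mulr1 // gt_eqF.
Qed.


Lemma dom_interval : is_interval (dom Rb).
Proof.
move=> x y [x0 xR] [y0 yR] z /andP[xz zy]; split; first exact: lt_le_trans xz.
by apply: le_lt_trans yR; rewrite lee_fin.
Qed.

Lemma dom_meas : measurable (dom Rb).
Proof. apply: is_interval_measurable; exact: dom_interval. Qed.

Let f0 := fun x => ((phi x)^-1)%:E.

Lemma f0_adm : admissible Rb f0.
Proof.
split; last by apply: aeW => x _.
apply: emono_meas; first exact: dom_interval.
move=> x y dx dy xy; rewrite lee_fin lef_pV2 ?posrE ?phi_pos //.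
by apply: phi_mono dy _ xy; case: dx.
Qed.

Lemma rearr_f0_ge u : dom Rb u -> f0 u <= rearr Rb f0 u.
Proof.
move=> du; have [u0 _] := du; have [t0 [ut0 t0R]] := dom_ext _ _ du.
have t00 : (0 < t0)%R by apply: lt_trans ut0.
apply: (@lim_le _ _ (u / t0)); first by rewrite ltr_pdivrMr // mul1r.
  by rewrite lee_fin invr_ge0 ltW // phi_pos.
move=> k /andP[k0 k1].
have kp : (0 < k)%R by apply: lt_trans k0; rewrite divr_gt0.
have uu' : (u < u / k)%R by rewrite ltr_pdivlMr // gtr_pMr.
have u't0 : (u / k < t0)%R by rewrite ltr_pdivrMr // mulrC -ltr_pdivrMr.
have du' : dom Rb (u / k)%R.
  by split; [exact: lt_trans uu' | apply: lt_le_trans t0R; rewrite lte_fin].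
apply: (@rearr_ge Rb _ u (u / k)%R) => //; first exact: ltW.
  by apply: le_trans t0R; rewrite lee_fin ltW.
move=> x x0 xu'; have dx := dom_down du' x0 (ltW xu').
rewrite gee0_abs; last by rewrite lee_fin invr_ge0 ltW // phi_pos.
rewrite -EFinM lee_fin.
have h1 := phi_mono du' x0 (ltW xu').
have h2 := phi_qc du' u0 (ltW uu').
have pu := phi_pos du; have pu' := phi_pos du'; have px := phi_pos dx.
apply: le_trans (_ : (phi (u / k))^-1 <= _)%R; last by rewrite lef_pV2 ?posrE.
have h3 : (k * phi (u / k) <= phi u)%R.
  have : (phi (u / k) * u * k <= phi u * (u / k) * k)%R by rewrite ler_pM2r.
  have -> : (phi u * (u / k) * k = phi u * u)%R by field; rewrite gt_eqF.
  have -> : (phi (u / k) * u * k = k * phi (u / k) * u)%R by ring.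
  by rewrite ler_pM2r.
by rewrite ler_pdivrMr // mulrC ler_pdivlMr.
Qed.


Lemma rearr_f0_le u : dom Rb u -> rearr Rb f0 u <= f0 u.
Proof.
move=> du; have [u0 _] := du; apply: rearr_le => //.
  by rewrite lee_fin invr_ge0 ltW // phi_pos.
move=> x dx ux; rewrite gee0_abs; last by rewrite lee_fin invr_ge0 ltW // phi_pos.
by rewrite lee_fin lef_pV2 ?posrE ?phi_pos // (phi_mono dx u0 ux).
Qed.

Lemma ii_nec (C : R) : (0 < C)%R ->
  (forall f, admissible Rb f -> forall t, dom Rb t ->
     Sphi Rb phi (dstar Rb f) t <= C%:E * Sphi Rb phi f t) ->
  forall t, dom Rb t -> (t^-1)%:E * J t <= (C / phi t)%:E.
Proof.
move=> C0 H t dt; have [t0 _] := dt.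
have e1 : (t^-1)%:E * J t <= dstar Rb f0 t.
  rewrite dstarE; apply: lemul; first by rewrite lee_fin invr_ge0 ltW.
  apply: ge0_le_integral => //.
  - move=> u; rewrite /= in_itv /= => /andP[u0 ut].
    by rewrite lee_fin invr_ge0 ltW // (phi_pos (dom_down dt u0 (ltW ut))).
  - by have := meas_cphi _ _ ler01 dt; apply: eq_measurable_fun => u _; rewrite mul1r.
  - exact: rearr_meas.
  - move=> u; rewrite /= in_itv /= => /andP[u0 ut].
    exact: (rearr_f0_ge _ (dom_down dt u0 (ltW ut))).
have e2 : Sphi Rb phi f0 t <= ((phi t)^-1)%:E.
  rewrite SphiE -[X in _ <= X]mule1; apply: lemul.
    by rewrite lee_fin invr_ge0 ltW // phi_pos.
  apply: M_ub => s s0 st; have ds := dom_down dt s0 (ltW st).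
  apply: (le_trans (lemul _ (rearr_f0_le _ ds))); first by rewrite lee_fin ltW // phi_pos.
  by rewrite /f0 -EFinM mulfV // gt_eqF // phi_pos.
apply: (le_trans e1); apply: (le_trans (rearr_dstar_ge _ _ _ dt)).
apply: (le_trans (Sphi_ge_rearr _ _ dt)); apply: (le_trans (H f0 f0_adm t dt)).
by rewrite EFinM; apply: lemul => //; rewrite lee_fin ltW.
Qed.


Lemma frac_le (v a b : R) : (0 <= v)%R -> (0 < a)%R -> (0 < b)%R -> (b <= 2 * a)%R ->
  (v / a <= 2 * v / b)%R.
Proof.
move=> v0 a0 b0 ba; rewrite ler_pdivrMr // mulrAC ler_pdivlMr //.
by nra.
Qed.

Lemma Sf_le_Sdf f t : dom Rb t -> Sphi Rb phi f t <= Sphi Rb phi (dstar Rb f) t.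
Proof.
move=> dt; rewrite !SphiE; apply: lemul; first by rewrite lee_fin invr_ge0 ltW // phi_pos.
apply: M_ub => s s0 st; have ds := dom_down dt s0 (ltW st).
apply: le_trans (M_lb _ _ _ s0 st); apply: lemul; first by rewrite lee_fin ltW // phi_pos.
exact: le_trans (dstar_ge Rb f s s0) (rearr_dstar_ge Rb f s ds).
Qed.

Lemma Sf_bound f t v u x : dom Rb t -> M f t = v%:E -> (0 < u)%R -> (u < t)%R ->
  dom Rb x -> (u <= x)%R -> Sphi Rb phi f x <= (2 * v / phi u)%:E.
Proof.
move=> dt Mf u0 ut dx ux.
have v0 : (0 <= v)%R by rewrite -lee_fin -Mf; exact: M_ge0.
have [t0 _] := dt.
have du : dom Rb u := dom_down dt u0 (ltW ut).
have pu := phi_pos du; have px := phi_pos dx.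
have pux : (phi u <= phi x)%R := phi_mono dx u0 ux.
rewrite SphiE.
suff : M f x <= (phi x * (2 * v / phi u))%:E.
  move=> h; apply: (le_trans (lemul _ h)); first by rewrite lee_fin invr_ge0 ltW.
  by rewrite -EFinM mulrA mulVf ?mul1r // gt_eqF.
apply: M_ub => s s0 sx.
have ds := dom_down dx s0 (ltW sx).
have [st|ts] := ltP s t.
  apply: (le_trans (M_lb _ _ _ s0 st)); rewrite Mf lee_fin.
  by rewrite mulrA ler_pdivlMr //; nra.
have h2 : (0 < t / 2)%R by rewrite divr_gt0.
have h2t : (t / 2 < t)%R by rewrite ltr_pdivrMr // ltr_pMr // ltr1n.
have d2 : dom Rb (t / 2)%R := dom_down dt h2 (ltW h2t).
have p2 := phi_pos d2.
have ht2 : (phi t <= 2 * phi (t / 2))%R.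
  have := phi_qc dt h2 (ltW h2t).
  move: p2; set w := (t / 2)%R => p2.
  have -> : t = (2 * w)%R by rewrite /w; field.
  have w0 : (0 < w)%R by [].
  move=> h; rewrite -(ler_pM2r w0); nra.
have hr : rearr Rb f s <= ((phi (t / 2))^-1 * v)%:E.
  apply: (le_trans (@rearr_ni Rb f (t / 2)%R s _)); first by apply: le_trans ts; exact: ltW.
  rewrite EFinM; apply: div_bound => //; rewrite -Mf; exact: M_lb.
apply: (@le_trans _ _ ((phi x)%:E * rearr Rb f s)).
  apply: lee_wpmul2r; first exact: rearr_ge0.
  by rewrite lee_fin; exact: phi_mono dx s0 (ltW sx).
apply: (le_trans (lemul _ hr)); first by rewrite lee_fin ltW.
rewrite -EFinM lee_fin ler_wpM2l ?(ltW px) // mulrC; apply: frac_le => //.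
by apply: le_trans ht2; exact: phi_mono dt u0 (ltW ut).
Qed.



Lemma i_suff (C : R) : (0 < C)%R ->
  (forall t, dom Rb t -> (t^-1)%:E * J t <= (C / phi t)%:E) ->
  forall f t, dom Rb t ->
    dstar Rb (Sphi Rb phi f) t <= (2 * C)%:E * Sphi Rb phi (dstar Rb f) t.
Proof.
move=> C0 HB f t dt; have [t0 _] := dt.
have C20 : (0 <= 2 * C)%R by rewrite mulr_ge0 // ltW.
apply: (@le_trans _ _ ((2 * C)%:E * Sphi Rb phi f t)); last first.
  by apply: lemul; [rewrite lee_fin | exact: Sf_le_Sdf].
have := M_ge0 f _ dt; rewrite SphiE; case Mf : (M f t) => [v| |] // v0; last first.
  rewrite gt0_muley ?lte_fin ?invr_gt0 ?phi_pos // gt0_muley ?leey //.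
  by rewrite lte_fin mulr_gt0.
rewrite lee_fin in v0.
have H1 : \int[mu]_(u in `]0%R, t[) rearr Rb (Sphi Rb phi f) u
          <= \int[mu]_(u in `]0%R, t[) ((2 * v) * (phi u)^-1)%:E.
  apply: ge0_le_integral => //.
  - by move=> u _; exact: rearr_ge0.
  - exact: rearr_meas.
  - by apply: meas_cphi => //; rewrite mulr_ge0.
  - move=> u; rewrite /= in_itv /= => /andP[u0 ut].
    have du := dom_down dt u0 (ltW ut).
    apply: rearr_le => //; first by rewrite lee_fin mulr_ge0 ?mulr_ge0 // invr_ge0 ltW // phi_pos.
    move=> x dx ux; rewrite gee0_abs; last exact: Sphi_ge0.
    exact: Sf_bound Mf u0 ut dx ux.
rewrite int_cphi // in H1; last by rewrite mulr_ge0.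
rewrite dstarE; apply: (le_trans (lemul _ H1)); first by rewrite lee_fin invr_ge0 ltW.
rewrite muleCA; apply: (le_trans (lemul _ (HB t dt))); first by rewrite lee_fin mulr_ge0.
rewrite -!EFinM lee_fin le_eqVlt; apply/orP; left; apply/eqP.
by field; rewrite gt_eqF // phi_pos.
Qed.


Lemma phi_scale u k : dom Rb (u / k)%R -> (0 < u)%R -> (0 < k)%R -> (k <= 1)%R ->
  (k * phi (u / k) <= phi u)%R.
Proof.
move=> du' u0 k0 k1.
have uu' : (u <= u / k)%R by rewrite ler_pdivlMr // ger_pMr.
have h := phi_qc du' u0 uu'.
have : (phi (u / k) * u * k <= phi u * (u / k) * k)%R by rewrite ler_pM2r.
have -> : (phi u * (u / k) * k = phi u * u)%R by field; rewrite gt_eqF.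
have -> : (phi (u / k) * u * k = k * phi (u / k) * u)%R by ring.
by rewrite ler_pM2r.
Qed.

Lemma M_mono g s x : (s <= x)%R -> M g s <= M g x.
Proof.
move=> sx; apply: ereal_sup_le => _ [y /= hy <-]; exists y => //.
move: hy; rewrite /= !in_itv /= => /andP[-> ys] /=; exact: lt_le_trans sx.
Qed.

Section Ind.
Variable a : R.
Hypothesis a0 : (0 < a)%R.
Hypothesis da : dom Rb a.
Let f1 := fun x : R => ((if (0 < x < a)%R then 1%R else 0%R : R))%:E.

Lemma f1_adm : admissible Rb f1.
Proof.
split; last by apply: aeW => x _; rewrite /f1; case: ifP.
apply: emono_meas; first exact: dom_interval.
move=> x y [x0 _] [y0 _] xy; rewrite /f1 x0 y0 /=.
case: (ltP y a) => ya; first by rewrite (le_lt_trans xy ya).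
by case: ifP.
Qed.

Lemma rearr_f1_le1 s : (0 < s)%R -> rearr Rb f1 s <= 1.
Proof.
move=> s0; apply: rearr_le => // x _ _; rewrite /f1; case: ifP => _.
  by rewrite abse1.
by rewrite abse0.
Qed.

Lemma rearr_f1_le0 s : (a <= s)%R -> rearr Rb f1 s <= 0.
Proof.
move=> as_; apply: rearr_le => //; first exact: lt_le_trans as_.
move=> x _ sx; rewrite /f1; case: ifP => [/andP[_ xa]|_]; last by rewrite abse0.
by move: (le_lt_trans (le_trans as_ sx) xa); rewrite ltxx.
Qed.

Lemma rearr_f1_ge1 s : (0 <= s)%R -> (s < a)%R -> 1 <= rearr Rb f1 s.
Proof.
move=> s0 sa; apply: (@rearr_ge Rb _ s a) => //; first by case: da => _ /ltW.
by move=> x x0 xa; rewrite /f1 x0 xa abse1.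
Qed.

Let I1 s := \int[mu]_(u in `]0%R, s[) rearr Rb f1 u.

Lemma I1_le_s s : (0 < s)%R -> I1 s <= s%:E.
Proof.
move=> s0; rewrite /I1.
have -> : s%:E = \int[mu]_(u in `]0%R, s[) (cst 1) u.
  rewrite integral_cst // mul1e; have h := @leb_itv_oo 0%R s (ltW s0); rewrite subr0 in h; exact/esym/h.
apply: ge0_le_integral => //.
- by move=> u _; exact: rearr_ge0.
- exact: rearr_meas.
- move=> u; rewrite /= in_itv /= => /andP[u0 _]; exact: rearr_f1_le1.
Qed.

Lemma I1_le_a s : (0 < s)%R -> I1 s <= a%:E.
Proof.
move=> s0; have [sa|as_] := leP s a.
  by apply: le_trans (I1_le_s _ s0) _; rewrite lee_fin.
apply: (le_trans (I_split Rb f1 a s a0 (ltW as_))).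
have -> : rearr Rb f1 a = 0.
  by apply/eqP; rewrite eq_le rearr_f1_le0 // rearr_ge0.
by rewrite mul0e adde0; exact: I1_le_s.
Qed.

Lemma dstar_f1 s : dom Rb s -> (phi s)%:E * dstar Rb f1 s <= (phi a)%:E.
Proof.
move=> ds; have [s0 _] := ds; have ps := phi_pos ds; rewrite dstarE.
have [sa|as_] := leP s a.
  apply: (le_trans (lemul _ (lemul _ (I1_le_s _ s0)))).
  - by rewrite lee_fin ltW.
  - by rewrite lee_fin invr_ge0 ltW.
  by rewrite -!EFinM mulVf ?mulr1 ?gt_eqF // lee_fin; exact: phi_mono da s0 sa.
apply: (le_trans (lemul _ (lemul _ (I1_le_a _ s0)))).
- by rewrite lee_fin ltW.
- by rewrite lee_fin invr_ge0 ltW.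
rewrite -(EFinM (s^-1) a) -EFinM lee_fin mulrCA mulrC ler_pdivrMr //.
exact: phi_qc ds a0 (ltW as_).
Qed.

Lemma Sdf1 t : dom Rb t -> Sphi Rb phi (dstar Rb f1) t <= ((phi t)^-1 * phi a)%:E.
Proof.
move=> dt; rewrite SphiE EFinM; apply: lemul.
  by rewrite lee_fin invr_ge0 ltW // phi_pos.
apply: M_ub => s s0 st; have ds := dom_down dt s0 (ltW st).
apply: le_trans (dstar_f1 _ ds); apply: lemul; first by rewrite lee_fin ltW // phi_pos.
exact: rearr_dstar_le.
Qed.

Lemma M_f1_ge : (phi a)%:E <= M f1 a.
Proof.
apply: (@lim_le _ _ 0%R) => //; first by rewrite lee_fin ltW // phi_pos.
move=> k /andP[k0 k1].
have ka0 : (0 < k * a)%R by rewrite mulr_gt0.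
have kaa : (k * a < a)%R by rewrite gtr_pMl.
apply: le_trans (M_lb _ _ _ ka0 kaa).
apply: (@le_trans _ _ ((phi (k * a))%:E * 1)); last first.
  by apply: lemul; [rewrite lee_fin ltW // (phi_pos (dom_down da ka0 (ltW kaa))) | exact: rearr_f1_ge1 _ (ltW ka0) kaa].
rewrite mule1 lee_fin.
have := phi_qc da ka0 (ltW kaa).
by rewrite mulrA [(phi a * k)%R]mulrC ler_pM2r.
Qed.

Lemma Sf1_ge x u' : (0 < x)%R -> (x < u')%R -> (a <= u')%R -> dom Rb u' ->
  (phi a / phi u')%:E <= Sphi Rb phi f1 x.
Proof.
move=> x0 xu' au' du'; have dx := dom_down du' x0 (ltW xu').
have pu' := phi_pos du'; have px := phi_pos dx.
have [xa|ax] := ltP x a.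
  apply: le_trans (Sphi_ge_rearr _ _ dx).
  apply: le_trans (rearr_f1_ge1 _ (ltW x0) xa).
  by rewrite lee_fin ler_pdivrMr // mul1r; exact: phi_mono du' a0 au'.
rewrite SphiE.
apply: (@le_trans _ _ ((phi x)^-1%:E * (phi a)%:E)); last first.
  apply: lemul; first by rewrite lee_fin invr_ge0 ltW.
  apply: le_trans M_f1_ge (M_mono _ _ _ ax).
rewrite -EFinM lee_fin [X in (_ <= X)%R]mulrC ler_wpM2l ?(ltW (phi_pos da)) //.
by rewrite lef_pV2 ?posrE //; exact: phi_mono du' x0 (ltW xu').
Qed.

Lemma rearr_Sf1_ge t u : dom Rb t -> (a <= u)%R -> (u < t)%R ->
  (phi a / phi u)%:E <= rearr Rb (Sphi Rb phi f1) u.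
Proof.
move=> dt au ut; have [t0 tR] := dt; have u0 : (0 < u)%R := lt_le_trans a0 au.
have du := dom_down dt u0 (ltW ut).
apply: (@lim_le _ _ (u / t)); first by rewrite ltr_pdivrMr // mul1r.
  by rewrite lee_fin divr_ge0 // ltW // phi_pos.
move=> k /andP[k0 k1].
have kp : (0 < k)%R by apply: lt_trans k0; rewrite divr_gt0.
have uu' : (u < u / k)%R by rewrite ltr_pdivlMr // gtr_pMr.
have u't : (u / k < t)%R by rewrite ltr_pdivrMr // mulrC -ltr_pdivrMr.
have du' : dom Rb (u / k)%R := dom_down dt (lt_trans u0 uu') (ltW u't).
apply: (@rearr_ge Rb _ u (u / k)%R) => //; first exact: ltW.
  by apply: le_trans (ltW tR); rewrite lee_fin ltW.
move=> x x0 xu'; rewrite gee0_abs; last exact: Sphi_ge0 _ _ (dom_down du' x0 (ltW xu')).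
apply: le_trans (Sf1_ge _ _ x0 xu' (le_trans au (ltW uu')) du').
rewrite -EFinM lee_fin mulrA [(k * phi a)%R]mulrC -mulrA ler_wpM2l ?(ltW (phi_pos da)) //.
have pu := phi_pos du; have pu' := phi_pos du'.
rewrite ler_pdivrMr // mulrC ler_pdivlMr //.
exact: phi_scale _ _ du' u0 kp (ltW k1).
Qed.

Lemma K_bound (C t : R) : (0 < C)%R ->
  (forall f, admissible Rb f -> forall t, dom Rb t ->
     dstar Rb (Sphi Rb phi f) t <= C%:E * Sphi Rb phi (dstar Rb f) t) ->
  dom Rb t -> (a < t)%R ->
  \int[mu]_(u in `[a, t[) ((phi u)^-1)%:E <= (C * t / phi t)%:E.
Proof.
move=> C0 H dt at_; have [t0 _] := dt; have pa := phi_pos da; have pt := phi_pos dt.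
have sub : `[a, t[%classic `<=` `]0%R, t[%classic.
  by move=> u; rewrite /= !in_itv /= => /andP[au ->]; rewrite (lt_le_trans a0 au).
have e1 : \int[mu]_(u in `[a, t[) ((phi a)%:E * ((phi u)^-1)%:E)
          <= \int[mu]_(u in `]0%R, t[) rearr Rb (Sphi Rb phi f1) u.
  have e0 : \int[mu]_(u in `[a, t[) rearr Rb (Sphi Rb phi f1) u
            <= \int[mu]_(u in `]0%R, t[) rearr Rb (Sphi Rb phi f1) u.
    apply: ge0_subset_integral => //; first exact: rearr_meas.
    by move=> u _; exact: rearr_ge0.
  apply: le_trans e0; apply: ge0_le_integral => //.
  - move=> u; rewrite /= in_itv /= => /andP[au ut].
    have du := dom_down dt (lt_le_trans a0 au) (ltW ut).
    by rewrite -EFinM lee_fin mulr_ge0 ?invr_ge0 // ltW // phi_pos.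
  - apply: (measurable_funS _ sub) => //.
    have := meas_cphi _ _ (ltW pa) dt; apply: eq_measurable_fun => u _; by rewrite EFinM.
  - exact: rearr_meas.
  - move=> u; rewrite /= in_itv /= => /andP[au ut]; rewrite -EFinM; exact: rearr_Sf1_ge dt au ut.
have nn : forall x, `[a, t[%classic x -> 0 <= ((phi x)^-1)%:E.
  move=> u; rewrite /= in_itv /= => /andP[au ut].
  have du := dom_down dt (lt_le_trans a0 au) (ltW ut).
  by rewrite lee_fin invr_ge0 ltW // phi_pos.
have mm : measurable_fun `[a, t[ (fun x => ((phi x)^-1)%:E).
  apply: (measurable_funS _ sub) => //.
  by have := meas_cphi _ _ ler01 dt; apply: eq_measurable_fun => u _; rewrite mul1r.
rewrite ge0_integralZl_EFin // in e1; last exact: ltW.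
have e2 := le_trans (H f1 f1_adm t dt) (lemul (ltW (C0 : (0 < C%:E)))%E (Sdf1 _ dt)).
rewrite dstarE in e2.
have e3 : \int[mu]_(u in `]0%R, t[) rearr Rb (Sphi Rb phi f1) u
          <= (t * (C * ((phi t)^-1 * phi a)))%:E.
  have := lemul (_ : 0 <= t%:E) e2; rewrite muleA -EFinM mulfV ?gt_eqF // mul1e EFinM.
  by apply; rewrite lee_fin ltW.
have := div_bound _ _ _ pa (le_trans e1 e3).
move=> h; apply: le_trans h _; rewrite -EFinM lee_fin le_eqVlt; apply/orP; left; apply/eqP.
by field; apply/andP; split; rewrite gt_eqF.
Qed.

End Ind.


Lemma i_nec (C : R) : (0 < C)%R ->
  (forall f, admissible Rb f -> forall t, dom Rb t ->
     dstar Rb (Sphi Rb phi f) t <= C%:E * Sphi Rb phi (dstar Rb f) t) ->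
  forall t, dom Rb t -> (t^-1)%:E * J t <= (C / phi t)%:E.
Proof.
move=> C0 H t dt; have [t0 _] := dt; have pt := phi_pos dt.
have KB a : (0 < a)%R -> (a < t)%R ->
    \int[mu]_(u in `[a, t[) ((phi u)^-1)%:E <= (C * t / phi t)%:E.
  by move=> a0 at_; exact: (K_bound a a0 (dom_down dt a0 (ltW at_)) C t C0 H dt at_).
pose F := fun n : nat => `[(t / (n.+2)%:R)%R, t[%classic.
have Fp n : (0 < t / (n.+2)%:R)%R by rewrite divr_gt0 // ltr0n.
have Ft n : (t / (n.+2)%:R < t)%R.
  by rewrite ltr_pdivrMr ?ltr0n // ltr_pMr // ltr1n.
have sub n : F n `<=` `]0%R, t[%classic.
  move=> u; rewrite /F /= !in_itv /= => /andP[au ->].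
  by rewrite (lt_le_trans (Fp n) au).
have nd : {homo F : n m / (n <= m)%N >-> (n <= m)%O}.
  move=> n m nm; rewrite subsetEset => u; rewrite /F /= !in_itv /= => /andP[au ->].
  rewrite andbT; apply: le_trans au; rewrite ler_wpM2l ?(ltW t0) //.
  by rewrite lef_pV2 ?posrE ?ltr0n // ler_nat ltnS ltnS.
have bU : \bigcup_n F n = `]0%R, t[%classic.
  apply/seteqP; split; first by move=> u [n _ /sub].
  move=> u; rewrite /= in_itv /= => /andP[u0 ut].
  exists (Num.trunc (t / u)) => //; rewrite /F /= in_itv /= ut andbT.
  rewrite ler_pdivrMr ?ltr0n // mulrC -ler_pdivrMr //.
  apply: le_trans (ltW (truncnS_gt _)) _.
  by rewrite ler_nat.
have mf : forall i, measurable_fun (F i) (fun u => ((phi u)^-1)%:E).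
  move=> i; apply: (measurable_funS _ (sub i)) => //.
  by have := meas_cphi _ _ ler01 dt; apply: eq_measurable_fun => u _; rewrite mul1r.
have f0' : forall i x, F i x -> 0 <= ((phi x)^-1)%:E.
  move=> i x /sub; rewrite /= in_itv /= => /andP[x0 xt].
  by rewrite lee_fin invr_ge0 ltW // (phi_pos (dom_down dt x0 (ltW xt))).
have hc := @ge0_nondecreasing_set_cvg_integral _ (measurableTypeR R) _ F (fun u => ((phi u)^-1)%:E) (@lebesgue_measure R) nd
  (fun i => measurable_itv _) mf f0'.
rewrite bU in hc.
have JF : J t <= (C * t / phi t)%:E.
  rewrite /J -(cvg_lim (@ereal_hausdorff R) hc).
  apply: lime_le; first exact: cvgP hc.
  by apply: nearW => n; exact: KB (Fp n) (Ft n).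
apply: (le_trans (lemul _ JF)); first by rewrite lee_fin invr_ge0 ltW.
rewrite -EFinM lee_fin le_eqVlt; apply/orP; left; apply/eqP.
by field; apply/andP; split; rewrite gt_eqF.
Qed.

End Phi.


End S.

Theorem lemma4p2 (R : realType) (Rb : \bar R) (phi : R -> R) :
  0 < Rb -> quasiconcave Rb phi ->
  ((exists C : R, (0 < C)%R /\
      forall f : R -> \bar R, admissible Rb f ->
      forall t : R, dom Rb t ->
        dstar Rb (Sphi Rb phi f) t <= C%:E * Sphi Rb phi (dstar Rb f) t)
     <-> Bcond Rb phi)
  /\
  ((exists C : R, (0 < C)%R /\
      forall f : R -> \bar R, admissible Rb f ->
      forall t : R, dom Rb t ->
        Sphi Rb phi (dstar Rb f) t <= C%:E * Sphi Rb phi f t)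
     <-> Bcond Rb phi).
Proof.
move=> _ qc; split; split.
- move=> [C [C0 H]]; exists C; split => // t dt; exact: (@i_nec R Rb phi qc C C0 H t dt).
- move=> [C [C0 HB]]; exists (2 * C)%R; split; first by rewrite mulr_gt0.
  by move=> f _ t dt; exact: (@i_suff R Rb phi qc C C0 HB f t dt).
- move=> [C [C0 H]]; exists C; split => // t dt; exact: (@ii_nec R Rb phi qc C C0 H t dt).
- move=> [C [C0 HB]]; exists C; split => //.
  by move=> f _ t dt; exact: (@ii_suff R Rb phi qc C C0 HB f t dt).
Qed.
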